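(* Let $\alpha,q\in(-1,1)$ and $x\in H$ with $\|x\|=1$, and let $G_{\alpha,q}(x)=b_{\alpha,q}(x)+b^*_{\alpha,q}(x)$. Let $\mu$ be the distribution of $G_{\alpha,q}(x)$ with respect to the vacuum state, i.e. the probability measure on $\mathbb{R}$ with $\int t^n\,\mu(dt)=\langle\Omega,G_{\alpha,q}(x)^n\Omega\rangle_{\alpha,q}$ for all $n\ge0$. Then $\mu=\mathrm{qMP}_{\alpha\langle x,\bar x\rangle,q}$.
   Context: Let $H_\mathbb{R}$ be a real separable Hilbert space and $H$ its complexification, with inner product $\langle\cdot,\cdot\rangle$ linear in the second argument. Fix a self-adjoint involution $x\mapsto\bar x$ on $H$ (linear, $\bar{\bar x}=x$, $\langle\bar x,y\rangle=\langle x,\bar y\rangle$); then $\langle x,\bar x\rangle$ is real with $|\langle x,\bar x\rangle|\le\|x\|^2$. Let $\Sigma(n)$ be the group of bijections $\sigma$ of $\{\pm1,\dots,\pm n\}$ with $\sigma(-k)=-\sigma(k)$, generated by $\pi_0=(1,-1)$ and $\pi_i=(i,i+1)$, $1\le i\le n-1$; for $\sigma$ written as a reduced word, $l_1(\sigma)$ is the number of occurrences of $\pi_0$ and $l_2(\sigma)$ the number of occurrences of $\pi_i$, $i\ge1$. $\Sigma(n)$ acts on $H^{\otimes n}$ by $\pi_i$ swapping the $i$-th and $(i+1)$-th factors and $\pi_0(x_1\otimes\cdots\otimes x_n)=\overline{x_1}\otimes x_2\otimes\cdots\otimes x_n$. Set $P^{(n)}_{\alpha,q}=\sum_{\sigma\in\Sigma(n)}\alpha^{l_1(\sigma)}q^{l_2(\sigma)}\sigma$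 ($n\ge1$, $0^0=1$), $P^{(0)}_{\alpha,q}=\mathrm{id}$. Let $\mathcal F=\bigoplus_{n\ge0}H^{\otimes n}$ be the algebraic full Fock space, $H^{\otimes0}=\mathbb{C}\Omega$, with $\langle x_1\otimes\cdots\otimes x_m,y_1\otimes\cdots\otimes y_n\rangle_{0,0}=\delta_{m,n}\prod_i\langle x_i,y_i\rangle$ and $\langle f,g\rangle_{\alpha,q}=\langle f,P_{\alpha,q}g\rangle_{0,0}$, $P_{\alpha,q}=\bigoplus_nP^{(n)}_{\alpha,q}$ (an inner product for $\alpha,q\in(-1,1)$). The $(\alpha,q)$-creation operator is $b^*_{\alpha,q}(x)(x_1\otimes\cdots\otimes x_n)=x_1\otimes\cdots\otimes x_n\otimes x$, $b^*_{\alpha,q}(x)\Omega=x$, and $b_{\alpha,q}(x)$ is its adjoint with respect to $\langle\cdot,\cdot\rangle_{\alpha,q}$. For $a,q\in(-1,1)$, the $q$-Meixner–Pollaczek polynomials $P^{(a,q)}_n$ are the monic polynomials defined by $P^{(a,q)}_{-1}=0$, $P^{(a,q)}_0=1$, $tP^{(a,q)}_n(t)=P^{(a,q)}_{n+1}(t)+[n]_q(1+aq^{n-1})P^{(a,q)}_{n-1}(t)$ for $n\ge0$, where $[n]_q=1+q+\cdots+q^{n-1}$ ($[0]_q=0$); $\mathrm{qMP}_{a,q}$ denotes the (unique, compactly supported, absolutely continuous and supported in $[-2/\sqrt{1-q},2/\sqrt{1-q}]$) probability measure on $\mathbb{R}$ with respect to which these polynomials are orthogonal. *)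

(* Defs.v *)
From HB Require Import structures.
From mathcomp Require Import all_boot all_order all_algebra all_fingroup.
From mathcomp Require Import complex.
From mathcomp Require Import all_classical all_reals all_analysis.
From Stdlib Require Import ClassicalEpsilon.
Set Implicit Arguments. Unset Strict Implicit. Unset Printing Implicit Defensive.
Import Order.TTheory GRing.Theory Num.Theory.
Local Open Scope ring_scope.

Section Hilbert.
Variables (R : realType) (V : lmodType R[i]) (ip : V -> V -> R[i]).

Definition hnorm (x : V) : R := Num.sqrt (complex.Re (ip x x)).

Definition is_inner_product : Prop :=
  [/\ (forall x y z, ip x (y + z) = ip x y + ip x z),
      (forall (a : R[i]) x y, ip x (a *: y) = a * ip x y),
      (forall x y, ip x y = (ip y x)^*),
      (forall x, complex.Im (ip x x) = 0 /\ 0 <= complex.Re (ip x x))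
    & (forall x, ip x x = 0 -> x = 0)].

Definition is_complete : Prop :=
  forall u : nat -> V,
    (forall e : R, 0 < e -> exists N, forall m n, (N <= m)%N -> (N <= n)%N ->
        hnorm (u m - u n) < e) ->
    exists l : V, forall e : R, 0 < e -> exists N, forall n, (N <= n)%N ->
        hnorm (u n - l) < e.

Definition is_separable : Prop :=
  exists d : nat -> V, forall (x : V) (e : R), 0 < e ->
    exists k, hnorm (x - d k) < e.

(* H is the complexification of a real Hilbert space H_R: there is a
   conjugation J (antilinear isometric involution) whose fixed points are H_R *)
Definition is_complexification : Prop :=
  exists J : V -> V,
    [/\ (forall x y, J (x + y) = J x + J y),
        (forall (a : R[i]) x, J (a *: x) = a^* *: J x),
        (forall x, J (J x) = x)
      & (forall x y, ip (J x) (J y) = (ip x y)^*)].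

Definition complexified_separable_hilbert : Prop :=
  [/\ is_inner_product, is_complete, is_separable & is_complexification].

Definition selfadjoint_involution (bar : V -> V) : Prop :=
  [/\ (forall x y, bar (x + y) = bar x + bar y),
      (forall (a : R[i]) x, bar (a *: x) = a *: bar x),
      (forall x, bar (bar x) = x)
    & (forall x y, ip (bar x) y = ip x (bar y))].
End Hilbert.

(* sigma k = (j, s) encodes sigma(k+1) = -(j+1) if s, +(j+1) otherwise  *)
(* (values on the positive part determine sigma, as sigma(-k)=-sigma(k))*)
Definition sperm (n : nat) := {ffun 'I_n -> 'I_n * bool}.

(* bijectivity of sigma on {+-1..+-n} <-> injectivity of the absolute part *)
Definition Sigma (n : nat) : {set sperm n} :=
  [set s : sperm n | injectiveb (fun k => (s k).1)].

Definition sp_id (n : nat) : sperm n := [ffun k => (k, false)].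

Definition sp_comp n (s t : sperm n) : sperm n :=
  [ffun k => ((s (t k).1).1, addb (t k).2 (s (t k).1).2)].

(* generators: the ordinal 0 stands for pi_0 = (1,-1); the ordinal i>=1 for
   pi_i = (i, i+1), i.e. the transposition of the 0-based positions i-1, i *)
Definition pred_ord n (g : 'I_n) : 'I_n :=
  Ordinal (leq_ltn_trans (leq_pred g) (ltn_ord g)).

Definition sp_gen n (g : 'I_n) : sperm n :=
  if val g == 0%N then [ffun k => (k, val k == 0%N)]
  else [ffun k => (tperm (pred_ord g) g k, false)].

Definition sp_eval n (w : seq 'I_n) : sperm n :=
  foldr (fun g s => sp_comp (sp_gen g) s) (sp_id n) w.

Definition reduced_word n (w : seq 'I_n) (s : sperm n) : Prop :=
  sp_eval w = s /\ forall w', sp_eval w' = s -> (size w <= size w')%N.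

Definition sp_lengths n (s : sperm n) : nat * nat :=
  epsilon (inhabits (0%N, 0%N)) (fun l => exists w, reduced_word w s /\
     l = (count (fun g : 'I_n => val g == 0%N) w,
          count (fun g : 'I_n => val g != 0%N) w)).
Definition l1 n (s : sperm n) := (sp_lengths s).1.
Definition l2 n (s : sperm n) := (sp_lengths s).2.

(* A simple tensor x_1 (x) ... (x) x_n is represented by [:: x_1;..;x_n] *)
Section Fock.
Variables (R : realType) (V : lmodType R[i]) (ip : V -> V -> R[i])
          (bar : V -> V).

(* sigma.(v_1 (x) ... (x) v_n) has j-th factor v_k if sigma(k) = j and
   bar(v_k) if sigma(k) = -j; on generators: pi_i swaps factors i, i+1 and
   pi_0 applies bar to the first factor *)
Definition sp_act n (s : sperm n) (v : seq V) (j : 'I_n) : V :=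
  match [pick k | (s k).1 == j] with
  | Some k => if (s k).2 then bar (nth 0 v k) else nth 0 v k
  | None => 0
  end.

(* <u, P_{alpha,q} v>_{0,0} for simple tensors u, v *)
Definition form_simple (alpha q : R) (u v : seq V) : R[i] :=
  if size u == size v then
    \sum_(s in Sigma (size v))
       (alpha%:C)%C ^+ (l1 s) * (q%:C)%C ^+ (l2 s) *
       \prod_(j < size v) ip (nth 0 u j) (sp_act s v j)
  else 0.

(* algebraic full Fock space: finite formal linear combinations of simple
   tensors (Omega = the empty tensor) *)
Definition fock := seq (R[i] * seq V).

Definition fock_add (f g : fock) : fock := f ++ g.
Definition Omega : fock := [:: (1, [::])].

(* <f, g>_{alpha,q} = <f, P_{alpha,q} g>_{0,0}, antilinear in f *)
Definition form (alpha q : R) (f g : fock) : R[i] :=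
  \sum_(a <- f) \sum_(b <- g) (a.1)^* * b.1 * form_simple alpha q a.2 b.2.

Definition creation (x : V) (f : fock) : fock :=
  [seq (a.1, rcons a.2 x) | a <- f].

Definition is_annihilation (alpha q : R) (x : V) (b : fock -> fock) : Prop :=
  forall f g, form alpha q (b f) g = form alpha q f (creation x g).

Definition gaussian (b : fock -> fock) (x : V) (f : fock) : fock :=
  fock_add (b f) (creation x f).

Definition vacuum_moment (alpha q : R) (b : fock -> fock) (x : V) (n : nat)
  : R[i] := form alpha q Omega (iter n (gaussian b x) Omega).
End Fock.

Definition qint (R : ringType) (q : R) (n : nat) : R := \sum_(i < n) q ^+ i.

(* pair (P_n, P_{n+1}) *)
Fixpoint qMP_pair (R : comRingType) (a q : R) (n : nat) : {poly R} * {poly R} :=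
  match n with
  | 0 => (1, 'X)
  | m.+1 => let: (p0, p1) := qMP_pair a q m in
            (p1, 'X * p1 - (qint q m.+1 * (1 + a * q ^+ m)) *: p0)
  end.

Definition qMP_poly (R : comRingType) (a q : R) (n : nat) : {poly R} :=
  (qMP_pair a q n).1.

Definition is_qMP (R : realType) (a q : R) (mu : probability R R) : Prop :=
  (forall m n, mu.-integrable setT
      (fun t => ((qMP_poly a q m).[t] * (qMP_poly a q n).[t])%:E)) /\
  (forall m n, m != n ->
      (\int[mu]_t ((qMP_poly a q m).[t] * (qMP_poly a q n).[t])%:E = 0)%E).

(* Main.v *)
Require Import Defs.
From HB Require Import structures.
From mathcomp Require Import all_boot all_order all_algebra all_fingroup.
From mathcomp Require Import complex.
From mathcomp Require Import all_classical all_reals all_analysis.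
From mathcomp Require Import zify ring lra.
From Stdlib Require Import ClassicalEpsilon.
Set Implicit Arguments. Unset Strict Implicit. Unset Printing Implicit Defensive.
Import Order.TTheory GRing.Theory Num.Theory.

Section Comb.
Variable n : nat.
Implicit Types (s t : sperm n).

Lemma SigmaP s : reflect (injective (fun k => (s k).1)) (s \in Sigma n).
Proof. rewrite inE; exact: injectiveP. Qed.

Lemma Sigma_onto s j : s \in Sigma n -> exists k, (s k).1 = j.
Proof.
move=> /SigmaP inj; have := injF_onto inj j.
by move=> /codomP [k ->]; exists k.
Qed.

Lemma sp_compE s t k : sp_comp s t k = ((s (t k).1).1, addb (t k).2 (s (t k).1).2).
Proof. by rewrite ffunE. Qed.

Lemma sp_comp_Sigma s t : s \in Sigma n -> t \in Sigma n -> sp_comp s t \in Sigma n.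
Proof.
move=> /SigmaP hs /SigmaP ht; apply/SigmaP => k k'.
by rewrite !sp_compE /= => /hs /ht.
Qed.

Lemma sp_gen0 (g : 'I_n) s k : val g = 0 ->
  sp_comp (sp_gen g) s k = ((s k).1, addb (s k).2 (val (s k).1 == 0)).
Proof. by move=> g0; rewrite sp_compE /sp_gen g0 eqxx !ffunE. Qed.

Lemma sp_genS (g : 'I_n) s k : val g != 0 ->
  sp_comp (sp_gen g) s k = (tperm (pred_ord g) g (s k).1, (s k).2).
Proof. by move=> g0; rewrite sp_compE /sp_gen (negbTE g0) !ffunE /= addbF. Qed.

Lemma sp_gen_Sigma (g : 'I_n) : sp_gen g \in Sigma n.
Proof.
apply/SigmaP => k k'; rewrite /sp_gen; case: ifP => _; rewrite !ffunE //=.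
exact: perm_inj.
Qed.

Lemma sp_id_Sigma : sp_id n \in Sigma n.
Proof. by apply/SigmaP => k k'; rewrite !ffunE. Qed.

Lemma sp_eval_Sigma (w : seq 'I_n) : sp_eval w \in Sigma n.
Proof.
elim: w => [|g w IH] /=; first exact: sp_id_Sigma.
exact: sp_comp_Sigma (sp_gen_Sigma g) IH.
Qed.

Definition Nst s : nat := \sum_k ((s k).2 : nat).
Definition Hf (k : 'I_n) (sg : bool) (k' : 'I_n) : nat :=
  if sg then (k' < k).+1 else (k < k' : nat).
Definition Mst s : nat :=
  \sum_k \sum_k' (((s k').1 < (s k).1) * Hf k (s k).2 k').

End Comb.

Section Comb2.
Variable n : nat.
Implicit Types (s t : sperm n).

Lemma sum2 (F F' : 'I_n -> 'I_n -> nat) (p1 p2 : 'I_n * 'I_n) :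
  p1 != p2 ->
  (forall p, p != p1 -> p != p2 -> F' p.1 p.2 = F p.1 p.2) ->
  F' p1.1 p1.2 = 0 -> F p2.1 p2.2 = 0 ->
  \sum_k \sum_k' F' k k' + F p1.1 p1.2 = \sum_k \sum_k' F k k' + F' p2.1 p2.2.
Proof.
move=> ne12 eqF F'1 F2.
have split2 : forall G : 'I_n * 'I_n -> nat, \sum_p G p =
    G p1 + G p2 + \sum_(p | (p != p1) && (p != p2)) G p.
  move=> G; rewrite (bigD1 p1) //= (bigD1 p2) //=; last by rewrite eq_sym.
  by rewrite addnA.
rewrite !pair_bigA (split2 (fun p => F' p.1 p.2)) (split2 (fun p => F p.1 p.2)) /= F'1 F2.
rewrite (eq_bigr (fun p => F p.1 p.2)); last by move=> p /andP[h1 h2]; exact: eqF.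
lia.
Qed.

Lemma tperm_lt (a b u u' : 'I_n) : nat_of_ord b = (nat_of_ord a).+1 ->
  ~~ ((u == b) && (u' == a)) -> ~~ ((u == a) && (u' == b)) ->
  (tperm a b u' < tperm a b u) = (u' < u).
Proof.
move=> /= hb; rewrite -!(inj_eq (@ord_inj _)).
case: tpermP => [->|->|/eqP ua /eqP ub]; case: tpermP => [->|->|/eqP u'a /eqP u'b];
  try move: ua ub; try move: u'a u'b; rewrite -?(inj_eq (@ord_inj _)) /=; lia.
Qed.

Lemma Nst_gen0 (g : 'I_n) s k0 : val g = 0 -> s \in Sigma n -> val (s k0).1 = 0 ->
  Nst (sp_comp (sp_gen g) s) + (s k0).2 = Nst s + ~~ (s k0).2.
Proof.
move=> g0 /SigmaP inj v0; rewrite /Nst (bigD1 k0) //= [in RHS](bigD1 k0) //=.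
rewrite sp_gen0 // v0 eqxx addbT.
rewrite (eq_bigr (fun k => ((s k).2 : nat))); last first.
  move=> k kk0; rewrite sp_gen0 //=; case: eqP => [e|]; last by rewrite addbF.
  by case/eqP: kk0; apply: inj; apply: val_inj; rewrite /= e v0.
by case: (s k0).2 => /=; lia.
Qed.

Lemma Mst_gen0 (g : 'I_n) s : val g = 0 -> Mst (sp_comp (sp_gen g) s) = Mst s.
Proof.
move=> g0; apply: eq_bigr => k _; apply: eq_bigr => k' _; rewrite !sp_gen0 //=.
by case: eqP => [->|]; [rewrite ltn0 | rewrite addbF].
Qed.

Lemma Nst_genS (g : 'I_n) s : val g != 0 -> Nst (sp_comp (sp_gen g) s) = Nst s.
Proof. by move=> g0; apply: eq_bigr => k _; rewrite sp_genS. Qed.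

Lemma Mst_genS (g : 'I_n) s k1 k2 : val g != 0 -> s \in Sigma n ->
  (s k1).1 = g -> (s k2).1 = pred_ord g ->
  Mst (sp_comp (sp_gen g) s) + Hf k1 (s k1).2 k2 = Mst s + Hf k2 (s k2).2 k1.
Proof.
move=> g0 /SigmaP inj v1 v2.
have hb : nat_of_ord g = (nat_of_ord (pred_ord g)).+1.
  by move: g0 {v1 v2}; case: g => [[|m] hm].
have ne12 : k1 != k2.
  apply/eqP => e; move: v1 v2; rewrite e => -> /(congr1 val).
  by move=> /= e'; move: hb; rewrite e'; lia.
pose F' k k' := (((sp_comp (sp_gen g) s k').1 < (sp_comp (sp_gen g) s k).1) *
   Hf k (sp_comp (sp_gen g) s k).2 k')%N.
pose F k k' := (((s k').1 < (s k).1) * Hf k (s k).2 k')%N.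
have ltpg : (pred_ord g < g) = true by rewrite hb ltnSn.
have ltgp : (g < pred_ord g) = false by apply/negbTE; rewrite -leqNgt hb.
have E : \sum_k \sum_k' F' k k' + F k1 k2 = \sum_k \sum_k' F k k' + F' k2 k1.
  apply: (@sum2 F F' (k1, k2) (k2, k1)) => /=.
  - by apply/eqP => -[e _]; move: ne12; rewrite e eqxx.
  - move=> [k k'] /= h1 h2; rewrite /F /F' !sp_genS //= tperm_lt //.
    + apply/negP => /andP[/eqP e1 /eqP e2]; move: h1; rewrite xpair_eqE.
      by rewrite -(inj _ _ (etrans e1 (esym v1))) -(inj _ _ (etrans e2 (esym v2))) !eqxx.
    + apply/negP => /andP[/eqP e1 /eqP e2]; move: h2; rewrite xpair_eqE.
      by rewrite -(inj _ _ (etrans e1 (esym v2))) -(inj _ _ (etrans e2 (esym v1))) !eqxx.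
  - by rewrite /F' !sp_genS // v1 v2 tpermL tpermR ltgp.
  - by rewrite /F v1 v2 ltgp.
move: E; rewrite /F /F' !sp_genS // v1 v2 tpermL tpermR ltpg !mul1n.
by rewrite /Mst; under eq_bigr do under eq_bigr do rewrite sp_genS //.
Qed.

End Comb2.

Section Comb3.
Variable n : nat.
Implicit Types (s t : sperm n).

Definition count0 (w : seq 'I_n) := count (fun g : 'I_n => val g == 0) w.
Definition countI (w : seq 'I_n) := count (fun g : 'I_n => val g != 0) w.

Lemma Hf_bound (k1 k2 : 'I_n) b1 b2 : k1 != k2 -> Hf k2 b2 k1 <= Hf k1 b1 k2 + 1.
Proof.
rewrite /Hf -(inj_eq (@ord_inj _)) => ne.
by case: b1; case: b2; lia.
Qed.

Lemma Nst_id : Nst (sp_id n) = 0.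
Proof. by apply: big1 => k _; rewrite ffunE. Qed.

Lemma Mst_id : Mst (sp_id n) = 0.
Proof.
apply: big1 => k _; apply: big1 => k' _; rewrite !ffunE /Hf /=.
by case: ltngtP.
Qed.

Lemma lower_bound (w : seq 'I_n) :
  Nst (sp_eval w) <= count0 w /\ Mst (sp_eval w) <= countI w.
Proof.
elim: w => [|g w [IH1 IH2]]; first by rewrite /= Nst_id Mst_id.
have ev : sp_eval (g :: w) = sp_comp (sp_gen g) (sp_eval w) := erefl.
rewrite ev {ev}.
have sS := sp_eval_Sigma w.
set s := sp_eval w in sS IH1 IH2 *.
have c0 : count0 (g :: w) = (val g == 0) + count0 w := erefl.
have cI : countI (g :: w) = (val g != 0) + countI w := erefl.
rewrite c0 cI {c0 cI}.
case: (boolP (val g == 0)) => [/eqP g0 | g0].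
  have [k0 v0] := Sigma_onto g sS.
  have := Nst_gen0 (k0:=k0) g0 sS; rewrite v0 g0 => /(_ erefl) E.
  rewrite Mst_gen0 //=; split; last by rewrite add0n.
  by move: E; case: (s k0).2 => /= E; lia.
have [k1 v1] := Sigma_onto g sS.
have [k2 v2] := Sigma_onto (pred_ord g) sS.
have ne : k1 != k2.
  apply/eqP => e; move: v1 v2; rewrite e => -> /(congr1 val) /=.
  by move: g0; case: g => [[|m] ?] //= _; lia.
have E := Mst_genS g0 sS v1 v2.
have B := Hf_bound (s k1).2 (s k2).2 ne.
rewrite Nst_genS //=; split; first by rewrite add0n.
lia.
Qed.

Lemma gen_invol (g : 'I_n) s : sp_comp (sp_gen g) (sp_comp (sp_gen g) s) = s.
Proof.
apply/ffunP => k; case: (boolP (val g == 0)) => [/eqP g0 | g0].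
  rewrite !sp_gen0 //=; case: (s k) => a b /=.
  by rewrite -addbA addbb addbF.
by rewrite !sp_genS //= tpermK; case: (s k).
Qed.

Definition sp_pos s (j : 'I_n) : 'I_n :=
  if [pick k | (s k).1 == j] is Some k then k else j.

Lemma sp_posK s j : s \in Sigma n -> (s (sp_pos s j)).1 = j.
Proof.
move=> sS; rewrite /sp_pos; case: pickP => [k /eqP //|none].
by have [k e] := Sigma_onto j sS; move: (none k); rewrite e eqxx.
Qed.

Lemma sp_pos_val s k : s \in Sigma n -> sp_pos s (s k).1 = k.
Proof.
move=> sS; have /SigmaP inj := sS; apply: inj; exact: sp_posK.
Qed.

Lemma incr_id (f : nat -> nat) :
  (forall a, a < n -> f a < n) -> (forall a, a.+1 < n -> f a < f a.+1) ->
  forall a, a < n -> f a = a.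
Proof.
move=> fn finc.
have ge : forall a, a < n -> a <= f a.
  elim=> [|a IH] ha //; have := finc a ha; have := IH (ltnW ha); lia.
have le : forall d, d < n -> f (n.-1 - d) <= n.-1 - d.
  elim=> [|d IH] hd; first by have := fn n.-1; rewrite subn0; lia.
  have h1 := IH (ltnW hd).
  have h2 := finc (n.-1 - d.+1); have: (n.-1 - d.+1).+1 = n.-1 - d by lia.
  move=> e; rewrite e in h2; have := h2 ltac:(lia); lia.
move=> a ha; have := ge a ha; have := le (n.-1 - a) ltac:(lia).
have -> : n.-1 - (n.-1 - a) = a by lia.
lia.
Qed.

Lemma dichotomy s : s \in Sigma n -> s = sp_id n \/
  exists g : 'I_n,
    [&& val g == 0, (Nst (sp_comp (sp_gen g) s)).+1 == Nst s &
      Mst (sp_comp (sp_gen g) s) == Mst s] \/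
    [&& val g != 0, Nst (sp_comp (sp_gen g) s) == Nst s &
      (Mst (sp_comp (sp_gen g) s)).+1 == Mst s].
Proof.
move=> sS; have /SigmaP inj := sS.
case: (boolP [exists k, (val (s k).1 == 0) && (s k).2]).
  move=> /existsP [k /andP[/eqP v0 sk]]; right; exists (s k).1; left.
  have := Nst_gen0 (k0:=k) v0 sS v0; rewrite sk /= => E.
  by rewrite v0 eqxx Mst_gen0 // eqxx andbT; apply/eqP; lia.
move=> nA.
case: (boolP [exists p : 'I_n * 'I_n, [&& val (s p.1).1 != 0,
   (s p.2).1 == pred_ord (s p.1).1 & Hf p.2 (s p.2).2 p.1 < Hf p.1 (s p.1).2 p.2]]).
  move=> /existsP [[k1 k2] /and3P [/= g0 /eqP v2 lt]]; right; exists (s k1).1; right.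
  have ne : k2 != k1.
    apply/eqP => e; move: v2; rewrite e => /(congr1 val) /=.
    by move: g0; case: (s k1).1 => [[|m] ?] //= _; lia.
  have E := Mst_genS g0 sS erefl v2.
  have B := Hf_bound (s k2).2 (s k1).2 ne.
  rewrite g0 Nst_genS // eqxx /=; apply/eqP; lia.
move=> nB; left.
have nA' : forall k, val (s k).1 = 0 -> ~~ (s k).2.
  move=> k v0; apply/negP => sk; move/existsP: nA; apply; exists k.
  by rewrite v0 eqxx sk.
have nB' : forall k1 k2, val (s k1).1 != 0 -> (s k2).1 = pred_ord (s k1).1 ->
    Hf k1 (s k1).2 k2 <= Hf k2 (s k2).2 k1.
  move=> k1 k2 g0 v2; rewrite leqNgt; apply/negP => lt; move/existsP: nB; apply.
  by exists (k1, k2); rewrite /= g0 v2 eqxx lt.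
have sgn : forall a k, val (s k).1 = a -> (s k).2 = false.
  elim=> [|a IH] k va; first by apply/negbTE; exact: nA'.
  set k2 := sp_pos s (pred_ord (s k).1).
  have v2 : (s k2).1 = pred_ord (s k).1 by rewrite sp_posK.
  have s2 : (s k2).2 = false by apply: IH; rewrite v2 /= va.
  have := nB' k k2 ltac:(by rewrite va) v2; rewrite s2 /Hf.
  by case: (s k).2 => //; lia.
pose f a := if insub a is Some j then nat_of_ord (sp_pos s (j : 'I_n)) else 0.
have fE : forall j : 'I_n, f (val j) = nat_of_ord (sp_pos s j).
  by move=> j; rewrite /f valK.
have fn : forall a, a < n -> f a < n.
  by move=> a ha; rewrite (fE (Ordinal ha)) ltn_ord.
have finc : forall a, a.+1 < n -> f a < f a.+1.
  move=> a ha; have ha' : a < n by lia.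
  rewrite (fE (Ordinal ha)) (fE (Ordinal ha')).
  set k1 := sp_pos s (Ordinal ha); set k2 := sp_pos s (Ordinal ha').
  have v1 : (s k1).1 = Ordinal ha by rewrite sp_posK.
  have v2 : (s k2).1 = pred_ord (s k1).1.
    by rewrite sp_posK //; apply: val_inj; rewrite /= v1.
  have ne : k1 != k2.
    apply/eqP => e; move: v1; rewrite e sp_posK // => /(congr1 val) /=; lia.
  have := nB' k1 k2 ltac:(by rewrite v1) v2.
  rewrite /Hf (sgn _ k1 erefl) (sgn _ k2 erefl).
  by move: ne; rewrite -(inj_eq (@ord_inj _)); lia.
have fid := incr_id fn finc.
apply/ffunP => k; rewrite ffunE.
have vk : val k = val (s k).1.
  by have := fid (val (s k).1) (ltn_ord _); rewrite fE sp_pos_val.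
have e1 : (s k).1 = k by apply: val_inj; rewrite /= -vk.
have e2 := sgn _ k erefl.
by move: e1 e2; case: (s k) => a b /= -> ->.
Qed.

End Comb3.

Section Comb4.
Variable n : nat.
Implicit Types (s t : sperm n).

Lemma exists_word s : s \in Sigma n ->
  exists w, [/\ sp_eval w = s, count0 w = Nst s & countI w = Mst s].
Proof.
move: {2}(Nst s + Mst s) (leqnn (Nst s + Mst s)) => m.
elim: m s => [|m IH] s hm sS.
  case: (dichotomy sS) => [->|[g [/and3P[_ /eqP e _]|/and3P[_ _ /eqP e]]]].
  - by exists [::]; rewrite /= Nst_id Mst_id.
  - lia.
  - lia.
case: (dichotomy sS) => [->|[g [/and3P[g0 /eqP e1 /eqP e2]|/and3P[g0 /eqP e1 /eqP e2]]]].
- by exists [::]; rewrite /= Nst_id Mst_id.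
- have [|w [ev c0 cI]] := IH (sp_comp (sp_gen g) s) _ (sp_comp_Sigma (sp_gen_Sigma g) sS).
    lia.
  exists (g :: w); split.
  + by rewrite /= ev gen_invol.
  + by rewrite /count0 /= -/(count0 w) c0 g0; lia.
  + by rewrite /countI /= -/(countI w) cI g0; lia.
- have [|w [ev c0 cI]] := IH (sp_comp (sp_gen g) s) _ (sp_comp_Sigma (sp_gen_Sigma g) sS).
    lia.
  exists (g :: w); split.
  + by rewrite /= ev gen_invol.
  + by rewrite /count0 /= -/(count0 w) c0 (negbTE g0); lia.
  + by rewrite /countI /= -/(countI w) cI g0; lia.
Qed.

Lemma size_counts (w : seq 'I_n) : size w = count0 w + countI w.
Proof. by rewrite /count0 /countI -(count_predC (fun g : 'I_n => val g == 0)). Qed.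

Lemma reduced_counts s w : s \in Sigma n -> reduced_word w s ->
  count0 w = Nst s /\ countI w = Mst s.
Proof.
move=> sS [ev min]; have [w0 [ev0 c0 cI]] := exists_word sS.
have := min w0 ev0; rewrite !size_counts c0 cI.
have [] := lower_bound w; rewrite ev; lia.
Qed.

Lemma sp_lengthsE s : s \in Sigma n -> sp_lengths s = (Nst s, Mst s).
Proof.
move=> sS; rewrite /sp_lengths.
set P := (fun l : nat * nat => _).
have : P (Nst s, Mst s).
  have [w0 [ev0 c0 cI]] := exists_word sS.
  exists w0; split; last by rewrite -/(count0 w0) -/(countI w0) c0 cI.
  split=> // w' ev'; rewrite !size_counts c0 cI.
  have [] := lower_bound w'; rewrite ev'; lia.
move=> /(ex_intro P) /(epsilon_spec (inhabits (0, 0))) [w [red ->]].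
have [c0 cI] := reduced_counts sS red.
by rewrite -/(count0 w) -/(countI w) c0 cI.
Qed.

Lemma l1E s : s \in Sigma n -> l1 s = Nst s.
Proof. by move=> sS; rewrite /l1 sp_lengthsE. Qed.
Lemma l2E s : s \in Sigma n -> l2 s = Mst s.
Proof. by move=> sS; rewrite /l2 sp_lengthsE. Qed.

Definition sp_inv s : sperm n := [ffun j => (sp_pos s j, (s (sp_pos s j)).2)].

Lemma sp_comp_assoc s1 s2 s3 :
  sp_comp s1 (sp_comp s2 s3) = sp_comp (sp_comp s1 s2) s3.
Proof.
apply/ffunP => k; rewrite !sp_compE /=; congr (_, _).
by rewrite addbA.
Qed.

Lemma sp_comp_id s : sp_comp s (sp_id n) = s.
Proof. by apply/ffunP => k; rewrite sp_compE !ffunE /=; case: (s k). Qed.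

Lemma sp_eval_cat (w1 w2 : seq 'I_n) :
  sp_eval (w1 ++ w2) = sp_comp (sp_eval w1) (sp_eval w2).
Proof.
elim: w1 => [|g w1 IH] /=.
  by apply/ffunP => k; rewrite sp_compE !ffunE /= addbF; case: (sp_eval w2 k).
by rewrite IH sp_comp_assoc.
Qed.

Lemma sp_eval_rev_comp (w : seq 'I_n) : sp_comp (sp_eval (rev w)) (sp_eval w) = sp_id n.
Proof.
elim: w => [|g w IH].
  by apply/ffunP => k; rewrite sp_compE !ffunE.
rewrite rev_cons -cats1 sp_eval_cat /= sp_comp_id -sp_comp_assoc.
by rewrite -[sp_comp (sp_gen g) (sp_comp (sp_gen g) _)]/(sp_comp _ _) gen_invol.
Qed.

Lemma sp_inv_unique s t : s \in Sigma n -> sp_comp t s = sp_id n -> t = sp_inv s.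
Proof.
move=> sS e; apply/ffunP => j; rewrite ffunE.
have := congr1 (fun f : sperm n => f (sp_pos s j)) e; rewrite /= sp_compE ffunE sp_posK //.
case: (t j) => a b [-> /=]; case: b; case: (_ .2) => //.
Qed.

Lemma sp_inv_Sigma s : s \in Sigma n -> sp_inv s \in Sigma n.
Proof.
move=> sS; apply/SigmaP => j j'; rewrite !ffunE /= => e.
by rewrite -(sp_posK j sS) -(sp_posK j' sS) e.
Qed.

Lemma sp_invE s k : s \in Sigma n -> sp_inv s (s k).1 = (k, (s k).2).
Proof. by move=> sS; rewrite ffunE sp_pos_val. Qed.

Lemma sp_invK s : s \in Sigma n -> sp_inv (sp_inv s) = s.
Proof.
move=> sS; have iS := sp_inv_Sigma sS.
apply/ffunP => k; rewrite [LHS]ffunE.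
have e : sp_pos (sp_inv s) k = (s k).1.
  by apply: (SigmaP _ iS); rewrite sp_posK // sp_invE.
by rewrite e sp_invE //=; case: (s k).
Qed.

Lemma sp_eval_rev (w : seq 'I_n) : sp_eval (rev w) = sp_inv (sp_eval w).
Proof. exact: sp_inv_unique (sp_eval_Sigma w) (sp_eval_rev_comp w). Qed.

Lemma stats_inv s : s \in Sigma n -> Nst (sp_inv s) = Nst s /\ Mst (sp_inv s) = Mst s.
Proof.
suff le : forall s, s \in Sigma n -> Nst (sp_inv s) <= Nst s /\ Mst (sp_inv s) <= Mst s.
  move=> sS; have [h1 h2] := le _ sS; have [h3 h4] := le _ (sp_inv_Sigma sS).
  by rewrite sp_invK // in h3 h4; split; lia.
move=> {}s sS; have [w [ev c0 cI]] := exists_word sS.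
have [] := lower_bound (rev w); rewrite sp_eval_rev ev.
by rewrite /count0 /countI !count_rev -/(count0 w) -/(countI w) c0 cI.
Qed.

End Comb4.

Section Comb5.
Variable n : nat.

Definition ins (t : sperm n) (j : 'I_n.+1) (e : bool) : sperm n.+1 :=
  [ffun k => if unlift ord_max k is Some k' then (lift j (t k').1, (t k').2)
             else (j, e)].

Definition del (s : sperm n.+1) : sperm n :=
  [ffun k' => (if unlift (s ord_max).1 (s (lift ord_max k')).1 is Some u then u else k',
               (s (lift ord_max k')).2)].

Lemma widen_lift (i : 'I_n) : widen_ord (leqnSn n) i = lift ord_max i.
Proof. by apply: val_inj; rewrite /= /bump; have := ltn_ord i; lia. Qed.

Lemma ins_max t j e : ins t j e ord_max = (j, e).
Proof. by rewrite ffunE unlift_none. Qed.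

Lemma ins_lift t j e (k : 'I_n) : ins t j e (lift ord_max k) = (lift j (t k).1, (t k).2).
Proof. by rewrite ffunE liftK. Qed.

Lemma ins_Sigma t j e : t \in Sigma n -> ins t j e \in Sigma n.+1.
Proof.
move=> /SigmaP inj; apply/SigmaP => k1 k2.
case: (unliftP ord_max k1) => [k1'|] ->; case: (unliftP ord_max k2) => [k2'|] ->;
  rewrite ?ins_max ?ins_lift //=.
- by move=> e1; congr lift; apply: inj; exact: (lift_inj e1).
- by move=> e'; have := neq_lift j (t k1').1; rewrite e' eqxx.
- by move=> e'; have := neq_lift j (t k2').1; rewrite -e' eqxx.
Qed.

Lemma del_ins t j e : del (ins t j e) = t.
Proof.
apply/ffunP => k; rewrite ffunE ins_max ins_lift /= liftK.
by case: (t k).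
Qed.

Lemma del_Sigma s : s \in Sigma n.+1 -> del s \in Sigma n.
Proof.
move=> /SigmaP inj; apply/SigmaP => k1 k2; rewrite !ffunE /=.
have ne : forall k, (s ord_max).1 != (s (lift ord_max k)).1.
  by move=> k; apply/eqP => /inj /eqP; rewrite (negbTE (neq_lift _ _)).
case: (unliftP (s ord_max).1 (s (lift ord_max k1)).1) => [u1 e1|e1];
  last by move: (ne k1); rewrite e1 eqxx.
case: (unliftP (s ord_max).1 (s (lift ord_max k2)).1) => [u2 e2|e2];
  last by move: (ne k2); rewrite e2 eqxx.
by move=> eu; move: e1 e2; rewrite eu => <- /inj /lift_inj.
Qed.

Lemma ins_del s : s \in Sigma n.+1 -> ins (del s) (s ord_max).1 (s ord_max).2 = s.
Proof.
move=> /SigmaP inj; apply/ffunP => k.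
case: (unliftP ord_max k) => [k'|] ->; rewrite ?ins_max ?ins_lift; last by case: (s ord_max).
rewrite ffunE /=.
case: (unliftP (s ord_max).1 (s (lift ord_max k')).1) => [u1 e1|e1].
  by rewrite -e1; case: (s _).
by move/inj: e1 => /eqP; rewrite eq_sym (negbTE (neq_lift _ _)).
Qed.

Lemma sum_Sigma_S (R : Type) (idx : R) (op : Monoid.com_law idx) (F : sperm n.+1 -> R) :
  \big[op/idx]_(s in Sigma n.+1) F s =
  \big[op/idx]_(j : 'I_n.+1) \big[op/idx]_(e : bool)
     \big[op/idx]_(t in Sigma n) F (ins t j e).
Proof.
rewrite (reindex (fun p : 'I_n.+1 * bool * sperm n => ins p.2 p.1.1 p.1.2)).
  rewrite pair_big_dep pair_big_dep.
  rewrite (eq_bigl (fun p : 'I_n.+1 * bool * sperm n => p.2 \in Sigma n)).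
    apply: eq_bigl => -[[j e] t] /=; by [].
  move=> [[j e] t] /=; apply/idP/idP => [h|]; last exact: ins_Sigma.
  by rewrite -(del_ins t j e); exact: del_Sigma.
exists (fun s : sperm n.+1 => ((s ord_max).1, (s ord_max).2, del s)).
  by move=> [[j e] t] _ /=; rewrite del_ins ins_max.
by move=> s sS; rewrite /= ins_del.
Qed.

Lemma Nst_ins t j e : Nst (ins t j e) = Nst t + e.
Proof.
rewrite /Nst big_ord_recr /= ins_max; congr (_ + _).
by apply: eq_bigr => k _; rewrite widen_lift ins_lift.
Qed.

Lemma sum_lt (m j : nat) : \sum_(u < m) (u < j : nat) = minn j m.
Proof.
elim: m => [|m IH]; first by rewrite big_ord0 minn0.
rewrite big_ord_recr /= IH; case: (ltnP m j) => h; lia.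
Qed.

Lemma sum_ge (m j : nat) : \sum_(u < m) (j <= u : nat) = m - minn j m.
Proof.
elim: m => [|m IH]; first by rewrite big_ord0.
rewrite big_ord_recr /= IH; case: (leqP j m) => h; lia.
Qed.

Lemma Hf_lift (i i0 : 'I_n) b :
  Hf (lift ord_max i) b (lift ord_max i0) = Hf i b i0.
Proof. by rewrite /Hf !lift_max. Qed.

Lemma Mst_ins t j e : t \in Sigma n ->
  Mst (ins t j e) = Mst t + (if e then n + j else n - j).
Proof.
move=> tS; have /SigmaP inj := tS.
have cnt : forall P : 'I_n -> nat, \sum_(k < n) P (t k).1 = \sum_(u < n) P u.
  by move=> P; rewrite [RHS](reindex_inj inj).
have hj := ltn_ord j.
rewrite /Mst big_ord_recr /= big_ord_recr /= ins_max ltnn mul0n addn0.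
under eq_bigr => k _ do rewrite big_ord_recr /= widen_lift !ins_lift ins_max.
rewrite big_split /=.
have P1 : \sum_(i < n) \sum_(i0 < n)
       ((ins t j e (widen_ord (leqnSn n) i0)).1 < bump j (t i).1) *
       Hf (lift ord_max i) (t i).2 (widen_ord (leqnSn n) i0) =
     \sum_(k < n) \sum_(k' < n) ((t k').1 < (t k).1) * Hf k (t k).2 k'.
  apply: eq_bigr => i _; apply: eq_bigr => i0 _.
  rewrite widen_lift ins_lift Hf_lift /=; congr (_ * _).
  by rewrite /bump; case: leqP; case: leqP => /=; lia.
have P2 : \sum_(i < n) (j < bump j (t i).1) * Hf (lift ord_max i) (t i).2 ord_max
     = n - j.
  rewrite (eq_bigr (fun i => (j <= (t i).1 : nat))).
    by rewrite (cnt (fun u => (j <= u : nat))) sum_ge; lia.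
  move=> i _; rewrite /Hf lift_max /=; have := ltn_ord i.
  by case: (t i).2; rewrite /bump; case: leqP => /=; lia.
have P3 : \sum_(i < n) ((ins t j e (widen_ord (leqnSn n) i)).1 < j) *
    Hf ord_max e (widen_ord (leqnSn n) i) = if e then j + j else 0.
  rewrite (eq_bigr (fun i => if e then ((t i).1 < j : nat) * 2 else 0)).
    case: e {P1}; last by rewrite big1.
    by rewrite -big_distrl /= (cnt (fun u => (u < j : nat))) sum_lt; lia.
  move=> i _; rewrite widen_lift ins_lift /Hf /=; have := ltn_ord i.
  by case: e {P1}; rewrite /bump; case: leqP => /=; lia.
rewrite P1 P2 P3; case: e {P1 P3} => /=; lia.
Qed.

End Comb5.

Local Open Scope ring_scope.

Section F.
Variables (R : realType) (V : lmodType R[i]) (ip : V -> V -> R[i]) (bar : V -> V).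
Hypothesis ipC : forall x y, ip x y = (ip y x)^*.
Hypothesis barS : forall x y, ip (bar x) y = ip x (bar y).
Variables (alpha q : R).

Definition bsel (b : bool) (y : V) := if b then bar y else y.

Lemma act_at m (s : sperm m) (v : seq V) k : s \in Sigma m ->
  sp_act bar s v (s k).1 = bsel (s k).2 (nth 0 v k).
Proof.
move=> /SigmaP inj; rewrite /sp_act; case: pickP => [k' /eqP /inj -> //|].
by move=> /(_ k); rewrite eqxx.
Qed.

Lemma act_prod m (s : sperm m) (v : seq V) (F : 'I_m -> V -> R[i]) : s \in Sigma m ->
  \prod_(j < m) F j (sp_act bar s v j) =
  \prod_(k < m) F (s k).1 (bsel (s k).2 (nth 0 v k)).
Proof.
move=> sS; have /SigmaP inj := sS.
rewrite (reindex_inj inj); apply: eq_bigr => k _; by rewrite act_at.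
Qed.

Definition FSg m (u v : seq V) : R[i] :=
  \sum_(s in Sigma m) (alpha%:C)%C ^+ (l1 s) * (q%:C)%C ^+ (l2 s) *
     \prod_(j < m) ip (nth 0 u j) (sp_act bar s v j).

Lemma form_simpleE u v : form_simple ip bar alpha q u v =
  if size u == size v then FSg (size v) u v else 0.
Proof. by []. Qed.

Definition inv' m (s : sperm m) := if s \in Sigma m then sp_inv s else s.

Lemma inv'K m : involutive (@inv' m).
Proof.
move=> s; rewrite /inv'; case: (boolP (s \in Sigma m)) => sS; last by rewrite (negbTE sS).
by rewrite sp_inv_Sigma // sp_invK.
Qed.

Lemma inv'_Sigma m (s : sperm m) : (inv' s \in Sigma m) = (s \in Sigma m).
Proof.
by rewrite /inv'; case: (boolP (s \in Sigma m)) => sS //; [rewrite sp_inv_Sigma | rewrite (negbTE sS)].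
Qed.

Lemma conj_real (r : R) : ((r%:C)%C)^* = (r%:C)%C.
Proof. exact: conjc_real. Qed.

Lemma FSg_conj m u v : (FSg m u v)^* = FSg m v u.
Proof.
rewrite /FSg rmorph_sum /=.
rewrite [RHS](reindex_inj (can_inj (@inv'K m))).
apply: eq_big => [s|s sS]; first by rewrite inv'_Sigma.
have iS := sp_inv_Sigma sS; have [eN eM] := stats_inv sS.
rewrite /inv' sS l1E // l2E // l1E // l2E // eN eM.
rewrite !rmorphM /= !rmorphXn /= !conj_real rmorph_prod /=; congr (_ * _).
under eq_bigr do rewrite -ipC.
rewrite (@act_prod _ _ _ (fun j y => ip y (nth 0 u j))) //.
rewrite (@act_prod _ _ _ (fun j y => ip (nth 0 v j) y)) //.
have /SigmaP inj := sS.
rewrite [RHS](reindex_inj inj); apply: eq_bigr => k _.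
by rewrite sp_invE //=; case: (s k).2; rewrite /bsel ?barS.
Qed.

End F.

Lemma real_of_conj (R : rcfType) (z : R[i]) : z^* = z -> z = ((complex.Re z)%:C)%C.
Proof.
case: z => a b /= e; have := congr1 (@complex.Im R) e; rewrite /= => h.
have hb : b = 0 by lra.
by rewrite hb.
Qed.

Section F2.
Variables (R : realType) (V : lmodType R[i]) (ip : V -> V -> R[i]) (bar : V -> V).
Hypothesis ipC : forall x y, ip x y = (ip y x)^*.
Hypothesis barS : forall x y, ip (bar x) y = ip x (bar y).
Variables (alpha q : R) (x : V).
Hypothesis hx : ip x x = 1.

Let aa := complex.Re ((alpha%:C)%C * ip x (bar x)).
Definition cn (n : nat) : R := qint q n.+1 * (1 + aa * q ^+ n).

Lemma beta_real : ip x (bar x) = ((complex.Re (ip x (bar x)))%:C)%C.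
Proof. by apply: real_of_conj; rewrite -ipC barS. Qed.

Lemma aaE : (aa%:C)%C = (alpha%:C)%C * ip x (bar x).
Proof.
rewrite /aa [in RHS]beta_real [in LHS]beta_real -rmorphM /=.
by [].
Qed.

Definition Qx m (w : seq V) (s : sperm m) :=
  \prod_(k < m) ip x (bsel bar (s k).2 (nth 0 w k)).

Lemma FSg_nseq m w : FSg ip bar alpha q m (nseq m x) w =
  \sum_(s in Sigma m) (alpha%:C)%C ^+ (Nst s) * (q%:C)%C ^+ (Mst s) * Qx w s.
Proof.
apply: eq_bigr => s sS; rewrite l1E // l2E //; congr (_ * _).
rewrite (@act_prod _ _ _ _ _ _ (fun j y => ip (nth 0 (nseq m x) j) y)) //.
by apply: eq_bigr => k _; rewrite nth_nseq ltn_ord.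
Qed.

Lemma Qx_ins n v (t : sperm n) j e : size v = n ->
  Qx (rcons v x) (ins t j e) = Qx v t * ip x (bsel bar e x).
Proof.
move=> sv; rewrite /Qx big_ord_recr /= ins_max; congr (_ * _); last first.
  by rewrite nth_rcons sv ltnn eqxx.
by apply: eq_bigr => k _; rewrite widen_lift ins_lift nth_rcons sv ltn_ord.
Qed.

Lemma key_identity n v : size v = n ->
  FSg ip bar alpha q n.+1 (nseq n.+1 x) (rcons v x) =
  ((cn n)%:C)%C * FSg ip bar alpha q n (nseq n x) v.
Proof.
move=> sv; rewrite !FSg_nseq sum_Sigma_S.
pose A (t : sperm n) := (alpha%:C)%C ^+ (Nst t) * (q%:C)%C ^+ (Mst t) * Qx v t.
pose B (j : 'I_n.+1) (e : bool) := (alpha%:C)%C ^+ e *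
   (q%:C)%C ^+ (if e then n + j else n - j)%N * ip x (bsel bar e x).
have step1 : \sum_(j < n.+1) \sum_(e : bool) \sum_(t in Sigma n)
    (alpha%:C)%C ^+ Nst (ins t j e) * (q%:C)%C ^+ Mst (ins t j e) * Qx (rcons v x) (ins t j e)
  = \sum_(j < n.+1) \sum_(e : bool) \sum_(t in Sigma n) A t * B j e.
  apply: eq_bigr => j _; apply: eq_bigr => e _; apply: eq_bigr => t tS.
  rewrite Nst_ins Mst_ins // (Qx_ins _ _ _ sv) /A /B !exprD.
  move: (alpha%:C%C ^+ Nst t) (alpha%:C%C ^+ e) (q%:C%C ^+ Mst t) (q%:C%C ^+ _)
    (Qx v t) (ip x _) => a1 a2 a3 a4 a5 a6; ring.
have SB : \sum_(j < n.+1) \sum_(e : bool) B j e = ((cn n)%:C)%C.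
  rewrite /B /cn rmorphM /= rmorphD /= rmorphM /= aaE rmorph1 rmorphXn /=.
  rewrite /qint rmorph_sum /=.
  under eq_bigr => j _ do rewrite big_bool /=.
  under eq_bigr => j _ do rewrite hx.
  under eq_bigr => j _ do rewrite mulr1 expr1 expr0 mul1r.
  rewrite big_split /=.
  rewrite [X in _ + X = _](reindex_inj rev_ord_inj) /=.
  rewrite [X in _ + X = _](eq_bigr (fun j : 'I_n.+1 => (q%:C)%C ^+ j)); last first.
    by move=> j _; congr (_ ^+ _); have := ltn_ord j; lia.
  under eq_bigr => j _ do rewrite exprD mulrA.
  rewrite [X in X + _ = _](eq_bigr (fun j : 'I_n.+1 =>
     (alpha%:C)%C * (q%:C)%C ^+ n * ip x (bar x) * (q%:C)%C ^+ j)); last first.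
    move=> j _; move: ((q%:C)%C ^+ j) ((q%:C)%C ^+ n) (alpha%:C)%C (ip x (bar x)).
    by move=> z1 z2 z3 z4; ring.
  rewrite -big_distrr /=.
  rewrite [X in _ = X * _](eq_bigr (fun i : 'I_n.+1 => (q%:C)%C ^+ i)); last first.
    by move=> i _; rewrite rmorphXn.
  move: (\sum_(i < n.+1) (q%:C)%C ^+ i) ((q%:C)%C ^+ n) (alpha%:C)%C (ip x (bar x)).
  by move=> z1 z2 z3 z4; ring.
rewrite step1 pair_bigA /= exchange_big /= -SB pair_bigA /= mulrC big_distrl /=.
by apply: eq_bigr => t _; rewrite big_distrr.
Qed.

End F2.

Section F3.
Variables (R : realType) (V : lmodType R[i]) (ip : V -> V -> R[i]) (bar : V -> V).
Hypothesis ipC : forall x y, ip x y = (ip y x)^*.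
Hypothesis barS : forall x y, ip (bar x) y = ip x (bar y).
Variables (alpha q : R) (x : V).
Hypothesis hx : ip x x = 1.
Variable b : fock V -> fock V.
Hypothesis hb : is_annihilation ip bar alpha q x b.

Notation fm := (Defs.form ip bar alpha q).
Notation fs := (form_simple ip bar alpha q).
Notation G := (gaussian b x).

Lemma fs_conj u v : (fs u v)^* = fs v u.
Proof.
rewrite !form_simpleE eq_sym; case: eqP => [e|_]; last by rewrite conjC0.
by rewrite FSg_conj // e.
Qed.

Lemma form_conj f g : (fm f g)^* = fm g f.
Proof.
rewrite /Defs.form rmorph_sum /= exchange_big /=; apply: eq_bigr => c _.
rewrite rmorph_sum /=; apply: eq_bigr => a _.
rewrite !rmorphM /= conjCK fs_conj; ring.
Qed.

Lemma form_catl f f' g : fm (f ++ f') g = fm f g + fm f' g.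
Proof. by rewrite /Defs.form big_cat. Qed.

Lemma form_catr f g g' : fm f (g ++ g') = fm f g + fm f g'.
Proof. by rewrite /Defs.form -big_split /=; apply: eq_bigr => a _; rewrite big_cat. Qed.

Lemma b_adjR f g : fm f (b g) = fm (creation x f) g.
Proof. by rewrite -form_conj hb form_conj. Qed.

Lemma G_sym f g : fm (G f) g = fm f (G g).
Proof.
rewrite /gaussian /fock_add form_catl form_catr hb b_adjR.
by rewrite addrC.
Qed.

Definition ee (k : nat) : fock V := [:: (1, nseq k x)].

Lemma form_ee k g : fm (ee k) g = \sum_(c <- g) c.1 * fs (nseq k x) c.2.
Proof.
rewrite /Defs.form big_cons big_nil addr0 /=.
by apply: eq_bigr => c _; rewrite conjC1 mul1r.
Qed.

Let cc := cn ip bar alpha q x.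

Lemma fs_key k w : fs (nseq k.+1 x) (rcons w x) = (cc k)%:C%C * fs (nseq k x) w.
Proof.
rewrite !form_simpleE !size_nseq size_rcons eqSS.
case: eqP => [e|]; last by rewrite mulr0.
by rewrite e (key_identity ipC barS alpha q hx (erefl (size w))).
Qed.

Lemma b_ee k g : fm (b (ee k.+1)) g = (cc k)%:C%C * fm (ee k) g.
Proof.
rewrite hb !form_ee /creation big_map big_distrr /=.
by apply: eq_bigr => c _; rewrite fs_key; ring.
Qed.

Lemma b_ee0 g : fm (b (ee 0)) g = 0.
Proof.
rewrite hb form_ee /creation big_map /=; apply: big1 => c _.
by rewrite form_simpleE size_rcons /= mulr0.
Qed.

Lemma rcons_nseq k : rcons (nseq k x) x = nseq k.+1 x.
Proof. by elim: k => //= k ->. Qed.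

Lemma G_ee k g : fm (G (ee k.+1)) g = fm (ee k.+2) g + (cc k)%:C%C * fm (ee k) g.
Proof.
rewrite /gaussian /fock_add form_catl b_ee addrC /creation /= rcons_nseq.
by [].
Qed.

Lemma G_ee0 g : fm (G (ee 0)) g = fm (ee 1) g.
Proof. by rewrite /gaussian /fock_add form_catl b_ee0 add0r. Qed.

Lemma moment_sym i j :
  fm (iter i G (ee 0)) (iter j G (ee 0)) = fm (ee 0) (iter (i + j) G (ee 0)).
Proof.
elim: i j => [|i IH] j //=.
by rewrite G_sym -(iterS j) IH addnS.
Qed.

Definition Phi (p : {poly R}) (g : fock V) : R[i] :=
  \sum_(i < size p) ((p`_i)%:C)%C * fm (iter i G (ee 0)) g.

Lemma Phi_bound N (p : {poly R}) (g : fock V) : (size p <= N)%N ->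
  Phi p g = \sum_(i < N) ((p`_i)%:C)%C * fm (iter i G (ee 0)) g.
Proof.
move=> hN; rewrite /Phi (big_ord_widen N (fun i => ((p`_i)%:C)%C * fm (iter i G (ee 0)) g)) //.
rewrite big_mkcond /=; apply: eq_bigr => i _; case: ifP => // /negbT.
by rewrite -leqNgt => /(nth_default 0) ->; rewrite rmorph0 mul0r.
Qed.

Lemma PhiD p r g : Phi (p + r) g = Phi p g + Phi r g.
Proof.
set N := maxn (size p) (size r).
rewrite !(Phi_bound (N:=N)) ?leq_maxl ?leq_maxr //; last first.
  by apply: leq_trans (size_polyD _ _) _; rewrite /N.
by rewrite -big_split /=; apply: eq_bigr => i _; rewrite coefD rmorphD mulrDl.
Qed.

Lemma PhiZ c p g : Phi (c *: p) g = (c%:C)%C * Phi p g.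
Proof.
rewrite (Phi_bound (N:=size p)) ?size_scale_leq // /Phi big_distrr /=.
by apply: eq_bigr => i _; rewrite coefZ rmorphM mulrA.
Qed.

Lemma PhiX p g : Phi ('X * p) g = Phi p (G g).
Proof.
rewrite (Phi_bound (N:=(size p).+1)); last first.
  apply: leq_trans (size_polyMleq _ _) _; rewrite size_polyX; lia.
rewrite big_ord_recl coefXM eqxx rmorph0 mul0r add0r /Phi.
apply: eq_bigr => i _; rewrite coefXM /= -G_sym.
by [].
Qed.

Lemma Phi1 g : Phi 1 g = fm (ee 0) g.
Proof. by rewrite /Phi size_poly1 big_ord1 coefC /= rmorph1 mul1r. Qed.

End F3.

Section F4.
Variables (R : realType) (V : lmodType R[i]) (ip : V -> V -> R[i]) (bar : V -> V).
Hypothesis ipC : forall x y, ip x y = (ip y x)^*.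
Hypothesis barS : forall x y, ip (bar x) y = ip x (bar y).
Variables (alpha q : R) (x : V).
Hypothesis hx : ip x x = 1.
Variable b : fock V -> fock V.
Hypothesis hb : is_annihilation ip bar alpha q x b.

Notation fm := (Defs.form ip bar alpha q).
Notation G := (gaussian b x).
Notation Ph := (Phi ip bar alpha q x b).
Let aR := complex.Re ((alpha%:C)%C * ip x (bar x)).

Lemma Phi_qMP n : (forall g, Ph (qMP_pair aR q n).1 g = fm (ee x n) g) /\
                  (forall g, Ph (qMP_pair aR q n).2 g = fm (ee x n.+1) g).
Proof.
elim: n => [|n [IH0 IH1]].
  split=> g /=; first exact: Phi1.
  rewrite -[X in Ph X]mulr1 PhiX //.
  transitivity (fm (ee x 0) (G g)); first exact: Phi1.
  by rewrite -G_sym // G_ee0.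
rewrite /=; move: IH0 IH1; case: (qMP_pair aR q n) => p0 p1 /= IH0 IH1.
split=> g //=.
rewrite -scaleNr PhiD PhiZ PhiX // IH1 -G_sym // G_ee // IH0 rmorphN /=.
by rewrite mulNr addrK.
Qed.

Lemma Phi0 g : Ph 0 g = 0.
Proof. by rewrite /Phi size_poly0 big_ord0. Qed.

Lemma Phi_sum N (F : 'I_N -> {poly R}) g : Ph (\sum_(i < N) F i) g = \sum_(i < N) Ph (F i) g.
Proof.
elim: N F => [|N IH] F; first by rewrite !big_ord0 Phi0.
by rewrite !big_ord_recr /= PhiD IH.
Qed.

Lemma PhiXn p j g : Ph (p * 'X^j) g = Ph p (iter j G g).
Proof.
elim: j g => [|j IH] g; first by rewrite expr0 mulr1.
by rewrite exprS mulrCA PhiX // IH iterSr.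
Qed.

Lemma PhiM p r g : Ph (p * r) g = \sum_(j < size r) ((r`_j)%:C)%C * Ph p (iter j G g).
Proof.
rewrite -{1}(coefK r) poly_def mulr_sumr Phi_sum; apply: eq_bigr => j _.
by rewrite -scalerAr PhiZ PhiXn.
Qed.

Lemma fm_ee_ee m n : m != n -> fm (ee x m) (ee x n) = 0.
Proof.
move=> ne; rewrite form_ee big_cons big_nil addr0 /= form_simpleE !size_nseq.
by rewrite (negbTE ne) mulr0.
Qed.

Lemma orth m n : m != n -> Ph (qMP_poly aR q m * qMP_poly aR q n) (ee x 0) = 0.
Proof.
move=> ne; rewrite PhiM.
have [h1 _] := Phi_qMP m; have [h2 _] := Phi_qMP n.
transitivity ((Ph (qMP_poly aR q n) (ee x m))^*).
  rewrite (eq_bigr (fun j : 'I_(size (qMP_poly aR q n)) =>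
     (((qMP_poly aR q n)`_j)%:C)%C * fm (ee x m) (iter j G (ee x 0)))); last first.
    by move=> j _; rewrite /qMP_poly h1.
  rewrite /Phi rmorph_sum; apply: eq_bigr => j _.
  by rewrite rmorphM /= conj_real form_conj.
by rewrite /qMP_poly h2 fm_ee_ee 1?eq_sym // conjC0.
Qed.

Lemma Phi_moments p : Ph p (ee x 0) =
  \sum_(i < size p) ((p`_i)%:C)%C * vacuum_moment ip bar alpha q b x i.
Proof.
apply: eq_bigr => i _; rewrite /vacuum_moment.
by have := moment_sym ipC barS hb i 0; rewrite addn0 /= => ->.
Qed.

End F4.

Section PolyInt.
Variables (R : realType) (mu : probability R R).
Hypothesis hint : forall n : nat, mu.-integrable setT (fun t : R => (t ^+ n)%:E).
Let M (i : nat) : R := fine (\int[mu]_t (t ^+ i)%:E).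

Lemma sum_int N (c : nat -> R) :
  mu.-integrable setT (fun t => (\sum_(i < N) c i * t ^+ i)%:E) /\
  (\int[mu]_t (\sum_(i < N) c i * t ^+ i)%:E = (\sum_(i < N) c i * M i)%:E)%E.
Proof.
elim: N => [|N [IH1 IH2]].
  have E : (fun t : R => (\sum_(i < 0) c i * t ^+ i)%:E) = cst 0%E.
    by apply/funext => t; rewrite big_ord0.
  by rewrite E big_ord0; split; [exact: integrable0 | exact: integral0].
have E : (fun t : R => (\sum_(i < N.+1) c i * t ^+ i)%:E) =
   ((fun t => (\sum_(i < N) c i * t ^+ i)%:E) \+ (fun t => (c N)%:E * (t ^+ N)%:E))%E.
  by apply/funext => t; rewrite big_ord_recr /= EFinD EFinM.
have iN : mu.-integrable setT (fun t => ((c N)%:E * (t ^+ N)%:E)%E).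
  exact: integrableZl.
rewrite E; split; first exact: integrableD.
rewrite integralD // IH2 integralZl // big_ord_recr /= EFinD EFinM.
by rewrite /M fineK //; apply: integrable_fin_num.
Qed.

Lemma poly_int (p : {poly R}) :
  mu.-integrable setT (fun t => (p.[t])%:E) /\
  (\int[mu]_t (p.[t])%:E = (\sum_(i < size p) p`_i * M i)%:E)%E.
Proof.
have E : (fun t => (p.[t])%:E) = (fun t => (\sum_(i < size p) p`_i * t ^+ i)%:E).
  by apply/funext => t; rewrite horner_coef.
rewrite E; exact: sum_int.
Qed.

End PolyInt.

Theorem mainTheorem7 (R : realType) (V : lmodType R[i]) (ip : V -> V -> R[i])
  (bar : V -> V) (alpha q : R) (x : V) (b : fock V -> fock V)
  (mu : probability R R) :
  complexified_separable_hilbert ip ->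
  selfadjoint_involution ip bar ->
  -1 < alpha < 1 -> -1 < q < 1 ->
  ip x x = 1 ->
  is_annihilation ip bar alpha q x b ->
  (forall n : nat,
      mu.-integrable setT (fun t : R => (t ^+ n)%:E) /\
      ((fine (\int[mu]_t (t ^+ n)%:E))%:C)%C = vacuum_moment ip bar alpha q b x n) ->
  is_qMP (complex.Re ((alpha%:C)%C * ip x (bar x))) q mu.
Proof.
move=> [[_ _ ipC _ _] _ _ _] [_ _ _ barS] _ _ hx hb hmom.
have hint : forall n, mu.-integrable setT (fun t : R => (t ^+ n)%:E) by move=> n; case: (hmom n).
set aR := complex.Re _.
split=> m n.
  have [h _] := poly_int hint (qMP_poly aR q m * qMP_poly aR q n).
  by under eq_fun do rewrite -hornerM.
move=> ne.
have [_ h] := poly_int hint (qMP_poly aR q m * qMP_poly aR q n).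
under eq_integral do rewrite -hornerM.
rewrite h; congr (_%:E).
set r := qMP_poly aR q m * qMP_poly aR q n.
have := orth ipC barS hx hb ne; rewrite Phi_moments //.
under eq_bigr => i _ do rewrite -(proj2 (hmom i)) -rmorphM.
rewrite -rmorph_sum => /(congr1 (@complex.Re R)) /=.
by [].
Qed.
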